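(* Let $T$, $\mathcal{S}=\mathcal{S}_+\cup\mathcal{S}_-$, $\Psi$, $U$, $\mu$, $P_\mu$ and $V_\mu$ be as in the context. Consider the discrete-time QBD with phase space $\mathcal{S}$ and transition blocks $$B_{-1}=\begin{bmatrix}0&(I-\mu^{-1}T_{++})^{-1}P_{\mu+-}\\0&V_\mu\end{bmatrix},\quad B_0=0,\quad B_1=\begin{bmatrix}(I-\mu^{-1}T_{++})^{-1}&0\\0&0\end{bmatrix}.$$ Then its $\mathcal{G}$-matrix is $$\mathcal{G}_B=\begin{bmatrix}0&\Psi\\0&V_\mu\end{bmatrix}.$$
   Context: $T$ is the generator of a continuous-time Markov chain on a finite set $\mathcal{S}=\mathcal{S}_+\cup\mathcal{S}_-$ (disjoint, both nonempty), partitioned into blocks $T_{++},T_{+-},T_{-+},T_{--}$ according to $\mathcal{S}_\pm$. $\Psi$ is the minimal nonnegative solution of $T_{+-}+\Psi T_{--}+T_{++}\Psi+\Psi T_{-+}\Psi=0$ (the first-return probability matrix of the unit-rate fluid queue with phase generator $T$, rates $+1$ on $\mathcal{S}_+$ and $-1$ on $\mathcal{S}_-$), and $U:=T_{--}+T_{-+}\Psi$. $\mu>0$ satisfies $\mu\ge\max_i|T_{ii}|$; $P_\mu:=I+\mu^{-1}T$ with blocks $P_{\mu++}$ etc., and $V_\mu:=I+\mu^{-1}U$. A discrete-time quasi-birth-death process (QBD) with transition blocks $L_{-1},L_0,L_1$ is a Markov chain $\{(Y_n,\kappa_n)\}$ on $\mathbb{Z}\times\mathcal{S}$ with $\mathbb{P}[Y_n=k+d,\kappa_n=j\mid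 Y_{n-1}=k,\kappa_{n-1}=i]=(L_d)_{ij}$ for $d\in\{-1,0,1\}$. Its $\mathcal{G}$-matrix has entries $\mathcal{G}_{ij}=\mathbb{P}[\theta<\infty,\kappa_\theta=j\mid Y_0=k,\kappa_0=i]$ with $\theta=\inf\{n>0:Y_n=k-1\}$. Matrices are partitioned into blocks according to $\mathcal{S}_+,\mathcal{S}_-$. *)

(* Defs.v *)
From HB Require Import structures.
From mathcomp Require Import all_boot all_order all_algebra.
From mathcomp Require Import all_classical all_reals all_analysis.
Set Implicit Arguments. Unset Strict Implicit. Unset Printing Implicit Defensive.
Import Order.TTheory GRing.Theory Num.Theory.
Import numFieldNormedType.Exports.
Local Open Scope ring_scope.
Local Open Scope classical_set_scope.

(* Phase space S = S_+ (first np indices) ∪ S_- (last nm indices). *)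

Definition is_generator (R : realType) (N : nat) (T : 'M[R]_N) : Prop :=
  (forall i j, i != j -> 0 <= T i j) /\ (forall i, \sum_(j < N) T i j = 0).

Definition nonneg_mx (R : realType) (m n : nat) (X : 'M[R]_(m, n)) : Prop :=
  forall i j, 0 <= X i j.

Definition riccati (R : realType) (np nm : nat) (T : 'M[R]_(np + nm))
  (X : 'M[R]_(np, nm)) : Prop :=
  ursubmx T + X *m drsubmx T + ulsubmx T *m X + X *m dlsubmx T *m X = 0.

Definition is_min_nonneg_riccati_sol (R : realType) (np nm : nat)
  (T : 'M[R]_(np + nm)) (Psi : 'M[R]_(np, nm)) : Prop :=
  [/\ nonneg_mx Psi, riccati T Psi &
      forall X, nonneg_mx X -> riccati T X -> forall i j, Psi i j <= X i j].

Definition Umx (R : realType) (np nm : nat) (T : 'M[R]_(np + nm))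
  (Psi : 'M[R]_(np, nm)) : 'M[R]_nm := drsubmx T + dlsubmx T *m Psi.
Definition Vmx (R : realType) (np nm : nat) (T : 'M[R]_(np + nm))
  (Psi : 'M[R]_(np, nm)) (mu : R) : 'M[R]_nm := 1%:M + mu^-1 *: Umx T Psi.
Definition Pmx (R : realType) (N : nat) (T : 'M[R]_N) (mu : R) : 'M[R]_N :=
  1%:M + mu^-1 *: T.

(* Taboo probabilities of a level-independent QBD with blocks Lm (=L_{-1}),
   L0, Lp (=L_1):  (qbd_taboo n l) i j =
   P[Y_n = k + l, kappa_n = j, Y_1, ..., Y_n >= k | Y_0 = k, kappa_0 = i]. *)
Fixpoint qbd_taboo (R : realType) (N : nat) (Lm L0 Lp : 'M[R]_N) (n l : nat)
  : 'M[R]_N :=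
  match n with
  | 0 => if l == 0%N then 1%:M else 0
  | n'.+1 => qbd_taboo Lm L0 Lp n' l *m L0 + qbd_taboo Lm L0 Lp n' l.+1 *m Lm
             + (if l is l'.+1 then qbd_taboo Lm L0 Lp n' l' *m Lp else 0)
  end.

(* G is the G-matrix of the QBD: G i j = P[theta < oo, kappa_theta = j | ...]
   = sum_{n >= 0} P[theta = n+1, kappa_{n+1} = j | Y_0 = k, kappa_0 = i],
   where P[theta = n+1, kappa_theta = j] = (qbd_taboo n 0 *m Lm) i j. *)
Definition is_Gmatrix (R : realType) (N : nat) (Lm L0 Lp G : 'M[R]_N) : Prop :=
  forall i j,
    (fun n : nat => (\sum_(k < n) (qbd_taboo Lm L0 Lp k 0 *m Lm)) i j)
      @ \oo --> G i j.

(* Main.v *)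
Require Import Defs.
From HB Require Import structures.
From mathcomp Require Import all_boot all_order all_algebra.
From mathcomp Require Import all_classical all_reals all_analysis.
Import Order.TTheory GRing.Theory Num.Theory.
Local Open Scope ring_scope.
From mathcomp Require Import zify.
Import numFieldNormedType.Exports.
Set Implicit Arguments. Unset Strict Implicit. Unset Printing Implicit Defensive.
Local Open Scope classical_set_scope.

Section Gen.
Variable R : realType.

Definition mxle (p q : nat) (X Y : 'M[R]_(p,q)) := forall i j, X i j <= Y i j.
Definition mxnn (p q : nat) (X : 'M[R]_(p,q)) := forall i j, 0 <= X i j.
Definition mxcvg (p q : nat) (f : nat -> 'M[R]_(p,q)) (L : 'M[R]_(p,q)) :=
  forall i j, (fun n => f n i j) @ \oo --> L i j.

Lemma cvg_sum_seq (I : Type) (r : seq I) (P : pred I) (f : I -> nat -> R)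
  (l : I -> R) : (forall i, f i @ \oo --> l i) ->
  (fun n => \sum_(i <- r | P i) f i n) @ \oo --> \sum_(i <- r | P i) l i.
Proof.
move=> H; elim: r => [|x r IH].
  under eq_cvg do rewrite big_nil.
  rewrite big_nil; exact: cvg_cst.
under eq_cvg do rewrite big_cons.
rewrite big_cons; case: (P x) => //.
exact: cvgD.
Qed.

Lemma mxcvg_mul p q s (f : nat -> 'M[R]_(p,q)) (g : nat -> 'M[R]_(q,s)) L K :
  mxcvg f L -> mxcvg g K -> mxcvg (fun n => f n *m g n) (L *m K).
Proof.
move=> Hf Hg i j.
under eq_cvg do rewrite mxE.
rewrite mxE; apply: cvg_sum_seq => k.
exact: cvgM.
Qed.

Lemma mxcvg_add p q (f g : nat -> 'M[R]_(p,q)) L K :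
  mxcvg f L -> mxcvg g K -> mxcvg (fun n => f n + g n) (L + K).
Proof.
move=> Hf Hg i j.
under eq_cvg do rewrite mxE.
rewrite mxE; exact: cvgD.
Qed.

Lemma mxcvg_cst p q (L : 'M[R]_(p,q)) : mxcvg (fun _ => L) L.
Proof. move=> i j; exact: cvg_cst. Qed.

Lemma mxcvg_shift p q (f : nat -> 'M[R]_(p,q)) L :
  mxcvg f L -> mxcvg (fun n => f n.+1) L.
Proof.
move=> H i j.
have := H i j.
move/(cvg_comp _ _ (cvg_addnr 1)).
by apply: cvg_trans; apply: near_eq_cvg; near=> n; rewrite /= addn1.
Unshelve. all: by end_near.
Qed.

Lemma mxcvg_le p q (f : nat -> 'M[R]_(p,q)) L B :
  mxcvg f L -> (forall n, mxle (f n) B) -> mxle L B.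
Proof.
move=> H HB i j.
apply: (closed_cvg _ (@closed_le _ (B i j)) _ (L i j) (H i j)).
by near=> n; apply: HB.
Unshelve. all: by end_near.
Qed.

Lemma mxcvg_ge p q (f : nat -> 'M[R]_(p,q)) L B :
  mxcvg f L -> (forall n, mxle B (f n)) -> mxle B L.
Proof.
move=> H HB i j.
apply: (closed_cvg _ (@closed_ge _ (B i j)) _ (L i j) (H i j)).
by near=> n; apply: HB.
Unshelve. all: by end_near.
Qed.

Lemma mxcvg_mono p q (f : nat -> 'M[R]_(p,q)) B :
  (forall n, mxle (f n) (f n.+1)) -> (forall n, mxle (f n) B) ->
  exists L, mxcvg f L.
Proof.
move=> Hm HB.
have Hc : forall i j, cvgn (fun n => f n i j).
  move=> i j; apply: nondecreasing_is_cvgn.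
    by apply/nondecreasing_seqP => n; apply: Hm.
  by exists (B i j) => _ [n _ <-]; apply: HB.
exists (\matrix_(i, j) limn (fun n => f n i j)) => i j.
by rewrite mxE; apply: Hc.
Qed.


Lemma mxle_refl p q (X : 'M[R]_(p,q)) : mxle X X.
Proof. by move=> i j. Qed.

Lemma mxle_trans p q (X Y Z : 'M[R]_(p,q)) : mxle X Y -> mxle Y Z -> mxle X Z.
Proof. by move=> H1 H2 i j; apply: le_trans (H1 i j) (H2 i j). Qed.

Lemma mxle_anti p q (X Y : 'M[R]_(p,q)) : mxle X Y -> mxle Y X -> X = Y.
Proof. by move=> H1 H2; apply/matrixP => i j; apply/le_anti; rewrite H1 H2. Qed.

Lemma mxnnE p q (X : 'M[R]_(p,q)) : mxnn X <-> mxle 0 X.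
Proof. by split=> H i j; move: (H i j); rewrite mxE. Qed.

Lemma mxnn_mul p q s (X : 'M[R]_(p,q)) (Y : 'M[R]_(q,s)) :
  mxnn X -> mxnn Y -> mxnn (X *m Y).
Proof.
move=> HX HY i j; rewrite mxE; apply: sumr_ge0 => k _.
exact: mulr_ge0.
Qed.

Lemma mxnn_add p q (X Y : 'M[R]_(p,q)) : mxnn X -> mxnn Y -> mxnn (X + Y).
Proof. by move=> HX HY i j; rewrite mxE; apply: addr_ge0. Qed.

Lemma mxnn_scale p q (k : R) (X : 'M[R]_(p,q)) : 0 <= k -> mxnn X -> mxnn (k *: X).
Proof. by move=> Hk HX i j; rewrite mxE; apply: mulr_ge0. Qed.

Lemma mxnn1 p : mxnn (1%:M : 'M[R]_p).
Proof. by move=> i j; rewrite mxE ler0n. Qed.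

Lemma mxnn0 p q : mxnn (0 : 'M[R]_(p,q)).
Proof. by move=> i j; rewrite mxE. Qed.

Lemma mxle_mull p q s (A : 'M[R]_(p,q)) (X Y : 'M[R]_(q,s)) :
  mxnn A -> mxle X Y -> mxle (A *m X) (A *m Y).
Proof.
move=> HA H i j; rewrite !mxE; apply: ler_sum => k _.
exact: ler_wpM2l.
Qed.

Lemma mxle_mulr p q s (A : 'M[R]_(q,s)) (X Y : 'M[R]_(p,q)) :
  mxnn A -> mxle X Y -> mxle (X *m A) (Y *m A).
Proof.
move=> HA H i j; rewrite !mxE; apply: ler_sum => k _.
exact: ler_wpM2r.
Qed.

Lemma mxle_add p q (X Y X' Y' : 'M[R]_(p,q)) :
  mxle X Y -> mxle X' Y' -> mxle (X + X') (Y + Y').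
Proof. by move=> H H' i j; rewrite !mxE; apply: lerD. Qed.

Lemma mxle_mul2 p q s (X X' : 'M[R]_(p,q)) (Y Y' : 'M[R]_(q,s)) :
  mxnn X -> mxnn Y' -> mxle X X' -> mxle Y Y' -> mxle (X *m Y) (X' *m Y').
Proof.
move=> HX HY' H1 H2; apply: (@mxle_trans _ _ _ (X *m Y')).
  exact: mxle_mull.
exact: mxle_mulr.
Qed.

Lemma mxcvg_scale p q (k : R) (f : nat -> 'M[R]_(p,q)) L :
  mxcvg f L -> mxcvg (fun n => k *: f n) (k *: L).
Proof.
move=> H i j; under eq_cvg do rewrite mxE.
by rewrite mxE; apply: cvgM => //; exact: cvg_cst.
Qed.

Lemma mxcvg_uniq p q (f : nat -> 'M[R]_(p,q)) L K :
  mxcvg f L -> mxcvg f K -> L = K.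
Proof.
move=> H1 H2; apply/matrixP => i j.
exact: (cvg_unique _ (H1 i j) (H2 i j)).
Qed.

End Gen.

From mathcomp Require Import ring lra.

Section Core.
Variables (R : realType) (np nm : nat) (a : 'M[R]_np) (b : 'M[R]_(np,nm))
  (c : 'M[R]_(nm,np)) (d : 'M[R]_nm) (Psi : 'M[R]_(np,nm)) (m : R).

Definition ric (X : 'M[R]_(np,nm)) := b + X *m d + a *m X + X *m c *m X.
Definition Mm : 'M[R]_np := 1%:M - m *: a.
Definition Am := invmx Mm.
Definition VZ (Z : 'M[R]_(np,nm)) : 'M[R]_nm := 1%:M + m *: (d + c *m Z).
Definition Vm := VZ Psi.
Definition Cm := Am *m (m *: b).
Definition Fm Z := Am *m (m *: b + Z *m VZ Z).
Definition FL Y := Am *m (m *: b + Y *m Vm).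

Hypotheses (hm : 0 < m) (ha : forall i j, i != j -> 0 <= a i j) (hb : mxnn b)
  (hc : mxnn c) (hd : forall i j, i != j -> 0 <= d i j)
  (ha1 : forall i, 0 <= 1 + m * a i i) (hd1 : forall i, 0 <= 1 + m * d i i)
  (hrow : forall i, \sum_j a i j + \sum_j b i j = 0)
  (hPsi : mxnn Psi) (hric : ric Psi = 0)
  (hmin : forall X, mxnn X -> ric X = 0 -> mxle Psi X).

Lemma rowsumM i : 1 <= \sum_k Mm i k.
Proof.
under eq_bigr do rewrite !mxE.
rewrite sumrB (bigD1 i) //= eqxx big1 ?addr0; last first.
  by move=> k /negbTE; rewrite eq_sym => ->.
rewrite -mulr_sumr.
have Hb : 0 <= \sum_j b i j by apply: sumr_ge0 => j _; apply: hb.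
have Ha : \sum_j a i j <= 0.
  by have := hrow i; lra.
have : m * \sum_j a i j <= 0 by rewrite pmulr_rle0.
rewrite /= ?mulr1n; move=> Hx.
have : (true%:R : R) = 1 by []. lra.
Qed.

Lemma M_pos kk (X : 'M[R]_(np,kk)) : mxnn (Mm *m X) -> mxnn X.
Proof.
move=> H i0 j; rewrite leNgt; apply/negP => Hneg.
case: (@arg_minP _ _ _ i0 predT (fun i => X i j) isT) => i _ Hmin.
have Xi : X i j < 0 := le_lt_trans (Hmin i0 isT) Hneg.
have := H i j; rewrite mxE.
have Hle : \sum_k Mm i k * X k j <= (\sum_k Mm i k) * X i j.
  rewrite mulr_suml; apply: ler_sum => k _.
  case: (eqVneq i k) => [->|ne] //.
  apply: ler_wnM2l; last exact: Hmin.
  rewrite !mxE (negbTE ne) sub0r oppr_le0; apply: mulr_ge0; first exact: ltW.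
  exact: ha.
have Hlt : (\sum_k Mm i k) * X i j < 0.
  by rewrite pmulr_rlt0 // (lt_le_trans ltr01 (rowsumM i)).
by rewrite leNgt (le_lt_trans Hle Hlt).
Qed.

Lemma M_unit : Mm \in unitmx.
Proof.
rewrite unitmxE unitfE -det_tr; apply/negP => /det0P [v vn0 vM].
have Hv : Mm *m v^T = 0 by rewrite -[Mm]trmxK -trmx_mul vM trmx0.
have h1 : mxnn v^T by apply: M_pos; rewrite Hv; apply: mxnn0.
have h2 : mxnn (- v^T) by apply: M_pos; rewrite mulmxN Hv oppr0; apply: mxnn0.
move/eqP: vn0; apply; apply/matrixP => i j.
have := h1 j i; have := h2 j i; rewrite !mxE; lra.
Qed.

Lemma A_nn : mxnn Am.
Proof. by apply: M_pos; rewrite /Am mulmxV ?M_unit //; apply: mxnn1. Qed.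

Lemma VZ_nn Z : mxnn Z -> mxnn (VZ Z).
Proof.
move=> HZ i j; rewrite /VZ.
have hW : mxnn (c *m Z) by apply: mxnn_mul.
move: (c *m Z) hW => W hW; rewrite !mxE.
have hcz := hW i j.
case: (eqVneq i j) => [->|ne] /=.
  have := hd1 j; have : 0 <= m * W j j by apply: mulr_ge0; [exact: ltW|apply: hW].
  have : (true%:R : R) = 1 by [].
  lra.
rewrite add0r; apply: mulr_ge0; first exact: ltW.
by apply: addr_ge0 => //; apply: hd.
Qed.

Lemma VZ_mono Z Z' : mxle Z Z' -> mxle (VZ Z) (VZ Z').
Proof.
move=> H i j; have := mxle_mull hc H i j; rewrite /VZ.
move: (c *m Z) (c *m Z') => W W' HW.
rewrite !mxE lerD2l; apply: ler_wpM2l; first exact: ltW.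
by rewrite lerD2l.
Qed.

Lemma ric_id Z : Mm *m Z - (m *: b + Z *m VZ Z) = - (m *: ric Z).
Proof.
rewrite /Mm /VZ /ric mulmxBl mul1mx mulmxDr mulmx1 -scalemxAl -scalemxAr.
rewrite mulmxDr mulmxA.
move: (a *m Z) (Z *m d) (Z *m c *m Z) => X1 X2 X3.
apply/matrixP => i j; rewrite !mxE; ring.
Qed.

Lemma ric_iff Z : Fm Z = Z <-> ric Z = 0.
Proof.
split.
  move=> HF; have : Mm *m Z - (m *: b + Z *m VZ Z) = 0.
    by rewrite -{1}HF /Fm /Am mulKVmx ?M_unit // subrr.
  rewrite ric_id => /eqP; rewrite oppr_eq0 scaler_eq0 => /orP [|/eqP //].
  by rewrite (gt_eqF hm).
move=> HR; rewrite /Fm.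
have : Mm *m Z - (m *: b + Z *m VZ Z) = 0 by rewrite ric_id HR scaler0 oppr0.
move/eqP; rewrite subr_eq0 => /eqP <-.
by rewrite /Am mulKmx ?M_unit.
Qed.

Lemma F_mono Z Z' : mxnn Z -> mxle Z Z' -> mxle (Fm Z) (Fm Z').
Proof.
move=> HZ H; apply: mxle_mull; first exact: A_nn.
apply: mxle_add; first exact: mxle_refl.
apply: mxle_mul2 => //; first by apply: VZ_nn => i j; apply: le_trans (HZ i j) (H i j).
exact: VZ_mono.
Qed.

Lemma FL_mono Y Y' : mxle Y Y' -> mxle (FL Y) (FL Y').
Proof.
move=> H; apply: mxle_mull; first exact: A_nn.
apply: mxle_add; first exact: mxle_refl.
by apply: mxle_mulr => //; apply: VZ_nn.
Qed.

Lemma Psi_fix : FL Psi = Psi.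
Proof. by have /ric_iff := hric. Qed.


Lemma mxcvg_ext p q (f g : nat -> 'M[R]_(p,q)) L :
  (forall n, f n = g n) -> mxcvg f L -> mxcvg g L.
Proof. by move=> E; have -> : g = f by apply/funext => n; rewrite E. Qed.

Lemma expS_mx n (X : 'M[R]_n) k : X ^+ k.+1 = X *m X ^+ k.
Proof. by rewrite exprS mulmxE. Qed.

Lemma expSr_mx n (X : 'M[R]_n) k : X ^+ k.+1 = X ^+ k *m X.
Proof. by rewrite exprSr mulmxE. Qed.

Definition Sm n := \sum_(j < n) Am ^+ j *m Cm *m Vm ^+ j.

Lemma S_succ n : Sm n.+1 = FL (Sm n).
Proof.
rewrite /Sm big_ord_recl !expr0 mul1mx mulmx1 /FL mulmxDr -/Cm; congr (_ + _).
rewrite mulmx_suml mulmx_sumr; apply: eq_bigr => j _.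
by rewrite /bump /= expS_mx expSr_mx !mulmxA.
Qed.

Lemma FL0_nn : mxnn (FL 0).
Proof.
rewrite /FL mul0mx addr0; apply: mxnn_mul; first exact: A_nn.
by apply: mxnn_scale => //; exact: ltW.
Qed.

Lemma S_le_Psi n : mxle (Sm n) Psi.
Proof.
elim: n => [|n IH].
  by rewrite /Sm big_ord0; apply/mxnnE.
rewrite S_succ -Psi_fix; exact: FL_mono.
Qed.

Lemma S_mono n : mxle (Sm n) (Sm n.+1).
Proof.
elim: n => [|n IH].
  by rewrite S_succ {1 2}/Sm big_ord0; apply/mxnnE; apply: FL0_nn.
by rewrite (S_succ n.+1) {1}(S_succ n); apply: FL_mono.
Qed.

Lemma S_nn n : mxnn (Sm n).
Proof.
apply/mxnnE; elim: n => [|n IH]; first by rewrite /Sm big_ord0; apply: mxle_refl.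
exact: mxle_trans IH (S_mono n).
Qed.

Lemma S_cvg : mxcvg Sm Psi.
Proof.
have [X HX] := mxcvg_mono S_mono S_le_Psi.
have X_le : mxle X Psi := mxcvg_le HX S_le_Psi.
have X_nn : mxnn X by apply/mxnnE; apply: (mxcvg_ge HX) => n; apply/mxnnE; apply: S_nn.
have X_fix : FL X = X.
  apply: (@mxcvg_uniq _ _ _ (fun n => FL (Sm n))).
    apply: mxcvg_mul; first exact: mxcvg_cst.
    apply: mxcvg_add; first exact: mxcvg_cst.
    apply: mxcvg_mul => //; exact: mxcvg_cst.
  by apply: (mxcvg_ext S_succ); apply: mxcvg_shift.
pose Zs k := iter k Fm 0.
have FX : mxle (Fm X) X.
  rewrite -{2}X_fix; apply: mxle_mull; first exact: A_nn.
  apply: mxle_add; first exact: mxle_refl.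
  by apply: mxle_mull => //; apply: VZ_mono.
have Fm0 : mxle 0 (Fm 0).
  rewrite /Fm mul0mx addr0; apply/mxnnE; apply: mxnn_mul; first exact: A_nn.
  by apply: mxnn_scale => //; exact: ltW.
have Z_mono : forall k, mxle 0 (Zs k) /\ mxle (Zs k) (Zs k.+1).
  elim=> [|k [IH0 IH1]]; first by split; [exact: mxle_refl|exact: Fm0].
  split; first exact: mxle_trans IH0 IH1.
  by apply: F_mono => //; apply/mxnnE.
have Z_le : forall k, mxle (Zs k) X.
  elim=> [|k IH]; first by apply/mxnnE.
  apply: mxle_trans FX; apply: F_mono => //.
  by apply/mxnnE; case: (Z_mono k).
have [Zl HZ] := mxcvg_mono (fun k => proj2 (Z_mono k)) Z_le.
have Zl_le : mxle Zl X := mxcvg_le HZ Z_le.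
have Zl_nn : mxnn Zl.
  by apply/mxnnE; apply: (mxcvg_ge HZ) => k; case: (Z_mono k).
have Zl_fix : Fm Zl = Zl.
  apply: (@mxcvg_uniq _ _ _ (fun k => Fm (Zs k))).
    apply: mxcvg_mul; first exact: mxcvg_cst.
    apply: mxcvg_add; first exact: mxcvg_cst.
    apply: mxcvg_mul => //.
    apply: mxcvg_add; first exact: mxcvg_cst.
    apply: mxcvg_scale; apply: mxcvg_add; first exact: mxcvg_cst.
    by apply: mxcvg_mul => //; exact: mxcvg_cst.
  by apply: (@mxcvg_ext _ _ _ (fun k => Zs k.+1)) => //; apply: mxcvg_shift.
have HPZ := hmin Zl_nn (proj1 (ric_iff Zl) Zl_fix).
have -> : Psi = X.
  apply: mxle_anti => //; exact: mxle_trans HPZ Zl_le.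
exact: HX.
Qed.

Definition Lmm : 'M[R]_(np + nm) := block_mx 0 Cm 0 Vm.
Definition Lpm : 'M[R]_(np + nm) := block_mx Am 0 0 0.

Definition Em (n l : nat) : 'M[R]_(np + nm) :=
  if l == n then block_mx (Am ^+ n) 0 0 (if n == 0%N then 1%:M else 0)
  else if (l < n)%N && ~~ odd (n + l) then
    block_mx 0 (Am ^+ (n + l)./2 *m Cm *m Vm ^+ ((n - l)./2).-1) 0 0
  else 0.

Lemma blk_Lm (x : 'M[R]_np) (y : 'M[R]_(np,nm)) (z : 'M[R]_(nm,np)) (w : 'M[R]_nm) :
  block_mx x y z w *m Lmm = block_mx 0 (x *m Cm + y *m Vm) 0 (z *m Cm + w *m Vm).
Proof. by rewrite /Lmm mulmx_block !mulmx0 !addr0. Qed.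

Lemma blk_Lp (x : 'M[R]_np) (y : 'M[R]_(np,nm)) (z : 'M[R]_(nm,np)) (w : 'M[R]_nm) :
  block_mx x y z w *m Lpm = block_mx (x *m Am) 0 (z *m Am) 0.
Proof. by rewrite /Lpm mulmx_block !mulmx0 !addr0. Qed.

Lemma mulV0 p (X : 'M[R]_(p,nm)) : X = X *m Vm ^+ 0.
Proof. by rewrite expr0 mulmx1. Qed.

Lemma mulVS p (X : 'M[R]_(p,nm)) k : X *m Vm ^+ k *m Vm = X *m Vm ^+ k.+1.
Proof. by rewrite expSr_mx mulmxA. Qed.

Lemma taboo_E n l : qbd_taboo Lmm 0 Lpm n l = Em n l.
Proof.
elim: n l => [|n IH] l.
  rewrite /= /Em; case: l => [|l] //=.
  by rewrite expr0 -scalar_mx_block.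
rewrite [qbd_taboo _ _ _ n.+1 l]/= mulmx0 add0r.
case: l => [|l] /=; rewrite ?addr0 !IH /Em.
  all: repeat case: ifP => ?.
  all: try (exfalso; lia).
  all: rewrite ?blk_Lm ?blk_Lp ?mul0mx ?add_block_mx ?mulmx0 ?mul0mx ?addr0 ?add0r ?mul0mx ?mulmx0 ?addr0 ?add0r //=.
  all: rewrite ?uphalfE.
  all: first [ by rewrite expSr_mx
             | congr block_mx; first [
                 rewrite mulVS; congr (Am ^+ _ *m Cm *m Vm ^+ _); lia
               | rewrite [LHS]mulV0; congr (Am ^+ _ *m Cm *m Vm ^+ _); lia ] ].
Qed.

Definition gm n := \sum_(k < n) qbd_taboo Lmm 0 Lpm k 0 *m Lmm.
Definition Hmx k : 'M[R]_(np + nm) := block_mx 0 (Sm k) 0 (if k == 0%N then 0 else Vm).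

Lemma S_recr k : Sm k.+1 = Sm k + Am ^+ k *m Cm *m Vm ^+ k.
Proof. by rewrite /Sm big_ord_recr. Qed.

Lemma g_eq n : gm n = Hmx (uphalf n).
Proof.
elim: n => [|n IH].
  by rewrite /gm /Hmx big_ord0 /Sm big_ord0 /= block_mx0.
rewrite /gm big_ord_recr -/(gm n) IH taboo_E /Em /=.
case: n IH => [|n] IH.
  rewrite /Hmx /= S_recr /Sm big_ord0 !expr0 add0r mulmx1 mul1mx -scalar_mx_block.
  by rewrite block_mx0 add0r mul1mx.
case: ifP => Hodd; last first.
  rewrite mul0mx addr0; congr Hmx; rewrite !uphalfE; lia.
rewrite blk_Lm !mul0mx !add0r mulVS.
have E1 : (n.+1 + 0)./2 = uphalf n.+1 by rewrite uphalfE; lia.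
have E2 : ((n.+1 - 0)./2).-1.+1 = uphalf n.+1 by rewrite uphalfE; lia.
have E3 : n.+1./2.+1 = (uphalf n.+1).+1 by rewrite !uphalfE; lia.
have E4 : (uphalf n.+1 == 0%N) = false by rewrite uphalfE; lia.
rewrite E1 E2 E3; move: (uphalf n.+1) E4 => k E4.
by rewrite /Hmx S_recr E4 /= add_block_mx !addr0.
Qed.

Definition P1 := col_mx (1%:M : 'M[R]_np) (0 : 'M[R]_(nm,np)).
Definition P2 := row_mx (0 : 'M[R]_(nm,np)) (1%:M : 'M[R]_nm).

Lemma blk_decomp (X : 'M[R]_(np,nm)) :
  block_mx 0 X 0 Vm = P1 *m X *m P2 + block_mx (0 : 'M[R]_np) 0 0 Vm.
Proof.
by rewrite /P1 /P2 mul_col_mx mul1mx mul0mx mul_col_row !mulmx0 mulmx1 mul0mx add_block_mx !addr0 !add0r.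
Qed.

Lemma uphalf_cvg : uphalf n @[n --> \oo] --> \oo.
Proof.
apply/cvgnyPge => A.
by exists (A.*2) => // n /= Hn; rewrite uphalfE; lia.
Qed.

Lemma G_cvg i j :
  (fun n => gm n i j) @ \oo --> (block_mx 0 Psi 0 Vm) i j.
Proof.
have H1 : mxcvg (fun k => block_mx (0 : 'M[R]_np) (Sm k) 0 Vm) (block_mx (0 : 'M[R]_np) Psi 0 Vm).
  have H : mxcvg (fun k => P1 *m Sm k *m P2 + block_mx (0 : 'M[R]_np) 0 0 Vm) (P1 *m Psi *m P2 + block_mx (0 : 'M[R]_np) 0 0 Vm).
    apply: mxcvg_add; last exact: mxcvg_cst.
    apply: mxcvg_mul; last exact: mxcvg_cst.
    apply: mxcvg_mul; first exact: mxcvg_cst.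
    exact: S_cvg.
  rewrite blk_decomp; apply: (mxcvg_ext _ H) => k; by rewrite [RHS]blk_decomp.
have H2 : (fun k => Hmx k i j) @ \oo --> (block_mx 0 Psi 0 Vm) i j.
  apply: cvg_trans (H1 i j); apply: near_eq_cvg; near=> k.
  rewrite /Hmx (_ : (k == 0%N) = false) //.
  near: k; by exists 1%N => // k /= Hk; lia.
have H3 := cvg_comp _ _ uphalf_cvg H2.
apply: cvg_trans H3; apply: near_eq_cvg; near=> n.
by rewrite /= g_eq.
Unshelve. all: by end_near.
Qed.

End Core.

Local Close Scope classical_set_scope.
Local Open Scope ring_scope.

Theorem lemma2 (R : realType) (np nm : nat) (hp : (0 < np)%N) (hm : (0 < nm)%N)
  (T : 'M[R]_(np + nm)) (hT : is_generator T)
  (Psi : 'M[R]_(np, nm)) (hPsi : is_min_nonneg_riccati_sol T Psi)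
  (mu : R) (hmu : 0 < mu) (hmuT : forall i, `|T i i| <= mu) :
  is_Gmatrix
    (block_mx 0 (invmx (1%:M - mu^-1 *: ulsubmx T) *m ursubmx (Pmx T mu))
              0 (Vmx T Psi mu))
    0
    (block_mx (invmx (1%:M - mu^-1 *: ulsubmx T)) 0 0 0)
    (block_mx 0 Psi 0 (Vmx T Psi mu)).
Proof.
have Pur : ursubmx (Pmx T mu) = mu^-1 *: ursubmx T.
  by apply/matrixP => i j; rewrite !mxE eq_lrshift /= add0r.
rewrite Pur.
case: hT => hT1 hT2.
case: hPsi => hP1 hP2 hP3.
have hm' : 0 < mu^-1 by rewrite invr_gt0.
have hdiag : forall k, 0 <= 1 + mu^-1 * T k k.
  move=> k; have := hmuT k; rewrite ler_norml => /andP [h1 _].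
  have : mu^-1 * - mu <= mu^-1 * T k k by apply: ler_wpM2l => //; exact: ltW.
  by rewrite mulrN mulVf ?gt_eqF //; lra.
move=> i j.
apply: (@G_cvg R np nm (ulsubmx T) (ursubmx T) (dlsubmx T) (drsubmx T) Psi (mu^-1)) => //.
- by move=> k l kl; rewrite !mxE; apply: hT1; rewrite eq_shift.
- by move=> k l; rewrite !mxE; apply: hT1; rewrite eq_shift.
- by move=> k l; rewrite !mxE; apply: hT1; rewrite eq_shift.
- by move=> k l kl; rewrite !mxE; apply: hT1; rewrite eq_shift.
- by move=> k; rewrite !mxE; apply: hdiag.
- move=> k; have H := hT2 (lshift nm k); rewrite big_split_ord /= in H.
  by rewrite -[RHS]H; congr (_ + _); apply: eq_bigr => l _; rewrite [LHS]mxE [LHS]mxE.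
Qed.
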